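(* Let $\{a,b,\gamma,\delta\}$ be a coupled SUSY system. Then $a^{\dagger}b$ and $b^{\dagger}a$ act as (raising and lowering) ladder operators for $a^{\dagger}a$ and for $b^{\dagger}b$, and $ba^{\dagger}$ and $ab^{\dagger}$ act as (raising and lowering) ladder operators for $aa^{\dagger}$ and for $bb^{\dagger}$. Namely, $$[a^{\dagger}a,a^{\dagger}b]=(\delta-\gamma)a^{\dagger}b,\quad [a^{\dagger}a,b^{\dagger}a]=-(\delta-\gamma)b^{\dagger}a,\quad [aa^{\dagger},ba^{\dagger}]=(\delta-\gamma)ba^{\dagger},\quad [aa^{\dagger},ab^{\dagger}]=-(\delta-\gamma)ab^{\dagger},$$ and the same relations hold with $a^{\dagger}a$ replaced by $b^{\dagger}b$ and $aa^{\dagger}$ replaced by $bb^{\dagger}$. Moreover, the triples $\{a^{\dagger}a-\tfrac{\gamma}{2},\,a^{\dagger}b,\,b^{\dagger}a\}$ and $\{aa^{\dagger}-\tfrac{\delta}{2},\,ab^{\dagger},\,ba^{\dagger}\}$ each generate a Lie algebra (under the commutator) isomorphic to $\mathfrak{su}(1,1)$: the operators $$\mathcal K_+=\tfrac{1}{\delta-\gamma}a^{\dagger}b,\quad \mathcal K_-=\tfrac{1}{\delta-\gamma}b^{\dagger}a,\quad \mathcal K_0=\tfrac{1}{\delta-\gamma}\big(a^{\dagger}a-\tfrac{\gamma}{2}\big)$$ satisfy $[\mathcal K_0,\mathcal K_\pm]=\pm\mathcal K_\pm$ and $[\mathcal K_+,\mathcal K_-]=-2\mathcal K_0$, and likewise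 $\widetilde{\mathcal K}_+=\tfrac{1}{\delta-\gamma}ba^{\dagger}$, $\widetilde{\mathcal K}_-=\tfrac{1}{\delta-\gamma}ab^{\dagger}$, $\widetilde{\mathcal K}_0=\tfrac{1}{\delta-\gamma}\big(aa^{\dagger}-\tfrac{\delta}{2}\big)$ satisfy the same relations.
   Context: Let $\mathfrak H$ be a Hilbert space. A coupled SUSY system is an ordered quadruple $\{a,b,\gamma,\delta\}$ where $a,b$ are closed, densely defined operators on $\mathfrak H$ with adjoints $a^{\dagger},b^{\dagger}$, and $\gamma,\delta\in\mathbb R$ with $\gamma<\delta$, such that $\operatorname{dom}a=\operatorname{dom}b$, $\operatorname{dom}a^{\dagger}=\operatorname{dom}b^{\dagger}$, $\operatorname{ran}a\subseteq\operatorname{dom}a^{\dagger}$ and $\operatorname{ran}a^{\dagger}\subseteq\operatorname{dom}a$, similarly $\operatorname{ran}b\subseteq\operatorname{dom}b^{\dagger}$ and $\operatorname{ran}b^{\dagger}\subseteq\operatorname{dom}b$, and $$a^{\dagger}a=b^{\dagger}b+\gamma,\qquad aa^{\dagger}=bb^{\dagger}+\delta.$$ $[X,Y]=XY-YX$ denotes the commutator; operator identities are understood as formal identities on a suitable common domain. An operator $L$ is called a ladder operator for $H$ if $[H,L]=cL$ for a nonzero real constant $c$ (raising if $c>0$, lowering if $c<0$). *)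

(* Defs.v *)
From mathcomp Require Import all_boot all_order all_algebra.
Set Implicit Arguments. Unset Strict Implicit. Unset Printing Implicit Defensive.
Import Order.TTheory GRing.Theory Num.Theory.
Local Open Scope ring_scope.

(* Operators are modelled as elements of an algebra A over a real field R
   (the algebra of operators acting on a suitable common domain); identities
   are formal algebraic identities. *)

Definition commr (A : ringType) (x y : A) : A := x * y - y * x.

Definition is_adjoint (R : realFieldType) (A : lalgType R) (dag : A -> A) : Prop :=
  [/\ forall x, dag (dag x) = x,
      forall x y, dag (x + y) = dag x + dag y,
      forall x y, dag (x * y) = dag y * dag x,
      forall (c : R) x, dag (c *: x) = c *: dag x
    & dag 1 = 1].

Definition coupled_susy (R : realFieldType) (A : lalgType R) (dag : A -> A)
    (a b : A) (gamma delta : R) : Prop :=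
  [/\ is_adjoint dag,
      gamma < delta,
      dag a * a = dag b * b + gamma%:A
    & a * dag a = b * dag b + delta%:A].

Definition su11_rel (R : realFieldType) (A : lalgType R) (K0 Kp Km : A) : Prop :=
  [/\ commr K0 Kp = Kp, commr K0 Km = - Km & commr Kp Km = - (2 : R) *: K0].

(* Main.v *)
Require Import Defs.
From mathcomp Require Import all_boot all_order all_algebra.
From mathcomp Require Import ring.
Import Order.TTheory GRing.Theory Num.Theory.
Local Open Scope ring_scope.
Set Implicit Arguments. Unset Strict Implicit.

Section NF.
Variables (R : realFieldType) (V : lmodType R) (w : V * V * V).
Definition nf (a b c : R) := a *: w.1.1 + b *: w.1.2 + c *: w.2.
Lemma nfD a b c a' b' c' : nf a b c + nf a' b' c' = nf (a + a') (b + b') (c + c').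
Proof. rewrite /nf !scalerDl. by rewrite addrACA -!addrA; congr (_ + _); rewrite addrCA !addrA. Qed.
Lemma nfN a b c : - nf a b c = nf (-a) (-b) (-c).
Proof. by rewrite /nf !opprD !scaleNr. Qed.
Lemma nfZ k a b c : k *: nf a b c = nf (k * a) (k * b) (k * c).
Proof. by rewrite /nf !scalerDr !scalerA. Qed.
Lemma nfX : w.1.1 = nf 1 0 0. Proof. by rewrite /nf !scale0r !addr0 scale1r. Qed.
Lemma nfY : w.1.2 = nf 0 1 0. Proof. by rewrite /nf !scale0r addr0 add0r scale1r. Qed.
Lemma nfZZ : w.2 = nf 0 0 1. Proof. by rewrite /nf !scale0r !add0r scale1r. Qed.
Lemma nfE a b c a' b' c' : a = a' -> b = b' -> c = c' -> nf a b c = nf a' b' c'.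
Proof. by move=> -> -> ->. Qed.
End NF.

Section S.
Variables (R : realFieldType) (A : lalgType R) (dag : A -> A).
Hypothesis Hd : is_adjoint dag.

Lemma sAr (c : R) (x y : A) : x * (c *: y) = c *: (x * y).
Proof.
case: Hd => dd _ dm ds _.
by rewrite -(dd (x * (c *: y))) dm ds -scalerAl ds dm !dd.
Qed.

Lemma mA (c : R) (x : A) : x * c%:A = c *: x.
Proof. by rewrite sAr mulr1. Qed.

Lemma lin (X Y : A) (e g : R) : (X + e *: Y) - (X + g *: Y) = (e - g) *: Y.
Proof. by rewrite scalerBl opprD addrACA subrr add0r. Qed.

Variables (s t u v : A) (g e : R).
Hypothesis Hst : s * t = u * v + g%:A.
Hypothesis Hts : t * s = v * u + e%:A.

Lemma L1 : commr (s * t) (s * v) = (e - g) *: (s * v).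
Proof.
rewrite /commr.
have -> : s * t * (s * v) = s * v * (u * v) + e *: (s * v).
  by rewrite mulrA -(mulrA s t s) Hts mulrDr mulrDl mA scalerAl !mulrA.
have -> : s * v * (s * t) = s * v * (u * v) + g *: (s * v).
  by rewrite Hst mulrDr mA.
by rewrite lin.
Qed.

Lemma L2 : commr (t * s) (v * s) = (e - g) *: (v * s).
Proof.
rewrite /commr.
have -> : t * s * (v * s) = v * u * (v * s) + e *: (v * s).
  by rewrite Hts mulrDl mulr_algl.
have -> : v * s * (t * s) = v * u * (v * s) + g *: (v * s).
  by rewrite mulrA -(mulrA v s t) Hst mulrDr mulrDl mA scalerAl !mulrA.
by rewrite lin.
Qed.

Lemma L1' : commr (s * t) (u * t) = - (e - g) *: (u * t).
Proof.
rewrite /commr.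
have -> : s * t * (u * t) = u * v * (u * t) + g *: (u * t).
  by rewrite Hst mulrDl mulr_algl.
have -> : u * t * (s * t) = u * v * (u * t) + e *: (u * t).
  by rewrite mulrA -(mulrA u t s) Hts mulrDr mulrDl mA scalerAl !mulrA.
by rewrite lin opprB.
Qed.

Lemma L2' : commr (t * s) (t * u) = - (e - g) *: (t * u).
Proof.
rewrite /commr.
have -> : t * s * (t * u) = t * u * (v * u) + g *: (t * u).
  by rewrite mulrA -(mulrA t s t) Hst mulrDr mulrDl mA scalerAl !mulrA.
have -> : t * u * (t * s) = t * u * (v * u) + e *: (t * u).
  by rewrite Hts mulrDr mA.
by rewrite lin opprB.
Qed.

Lemma L3 : commr (s * v) (u * t) = - (e - g) *: ((2:R) *: (s * t) - g%:A).
Proof.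
rewrite /commr.
have Hvu : v * u = t * s - e%:A by rewrite Hts addrK.
have Huv : u * v = s * t - g%:A by rewrite Hst addrK.
have -> : s * v * (u * t) = s * t * (s * t) - e *: (s * t).
  by rewrite mulrA -(mulrA s v u) Hvu mulrBr mulrBl mA scalerAl !mulrA.
have -> : u * t * (s * v) = u * v * (u * v) + e *: (u * v).
  by rewrite mulrA -(mulrA u t s) Hts mulrDr mulrDl mA -scalerAl !mulrA.
rewrite Huv.
rewrite mulrBr !mulrBl mA mulr_algl scalerBr.
rewrite mulr_algl scalerA.
rewrite -/(_ *: (1 : A)) -!scalerA.
pose w := (s * t * (s * t), s * t, 1 : A).
rewrite -[s * t * (s * t)]/(w.1.1) -[s * t]/(w.1.2) -[1 : A]/(w.2).
clearbody w.
rewrite [w.1.1](@nfX _ _ w) [w.1.2](@nfY _ _ w) [w.2](@nfZZ _ _ w).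
rewrite !(nfZ, nfN, nfD); apply: nfE; ring.
Qed.
End S.

Lemma commZ (R : realFieldType) (A : lalgType R) (dag : A -> A) (Hd : is_adjoint dag)
  (k k' c : R) (X Y : A) :
  commr (k *: (X - c%:A)) (k' *: Y) = (k * k') *: commr X Y.
Proof.
rewrite /commr -!scalerAl !(sAr Hd) !scalerA mulrBl mulrBr mulr_algl (mA Hd).
by rewrite (mulrC k') -scalerBr opprB addrA subrK.
Qed.

Lemma commZ0 (R : realFieldType) (A : lalgType R) (dag : A -> A) (Hd : is_adjoint dag)
  (k k' : R) (X Y : A) :
  commr (k *: X) (k' *: Y) = (k * k') *: commr X Y.
Proof.
by rewrite /commr -!scalerAl !(sAr Hd) !scalerA scalerBr mulrC.
Qed.

Lemma su11_gen (R : realFieldType) (A : lalgType R) (dag : A -> A) (Hd : is_adjoint dag)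
  (d c : R) (X Y Z : A) : d != 0 ->
  commr X Y = d *: Y -> commr X Z = - d *: Z ->
  commr Y Z = - d *: ((2:R) *: X - c%:A) ->
  su11_rel (d^-1 *: (X - (c / 2)%:A)) (d^-1 *: Y) (d^-1 *: Z).
Proof.
move=> d0 h1 h2 h3; split.
- rewrite (commZ Hd) h1 scalerA; congr (_ *: _); field; exact: d0.
- rewrite (commZ Hd) h2 scalerA -scaleNr; congr (_ *: _); field; exact: d0.
- rewrite (commZ0 Hd) h3 !scalerA.
  have -> : (2:R) *: X - c%:A = (2:R) *: (X - (c / 2)%:A).
    rewrite scalerBr scalerA; congr (_ - _ *: _); field => //.
  by rewrite scalerA; congr (_ *: _); field.
Qed.

Lemma commN (A : ringType) (x y : A) : commr x y = - commr y x.
Proof. by rewrite /commr opprB. Qed.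

Theorem theorem1 (R : realFieldType) (A : lalgType R) (dag : A -> A)
    (a b : A) (gamma delta : R) :
  coupled_susy dag a b gamma delta ->
  let d := delta - gamma in
  (commr (dag a * a) (dag a * b) = d *: (dag a * b) /\
   commr (dag a * a) (dag b * a) = - d *: (dag b * a) /\
   commr (a * dag a) (b * dag a) = d *: (b * dag a) /\
   commr (a * dag a) (a * dag b) = - d *: (a * dag b) /\
   commr (dag b * b) (dag a * b) = d *: (dag a * b) /\
   commr (dag b * b) (dag b * a) = - d *: (dag b * a) /\
   commr (b * dag b) (b * dag a) = d *: (b * dag a) /\
   commr (b * dag b) (a * dag b) = - d *: (a * dag b)) /\
  su11_rel (d^-1 *: (dag a * a - (gamma / 2)%:A))
           (d^-1 *: (dag a * b)) (d^-1 *: (dag b * a)) /\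
  su11_rel (d^-1 *: (a * dag a - (delta / 2)%:A))
           (d^-1 *: (b * dag a)) (d^-1 *: (a * dag b)).
Proof.
case=> Hd Hlt H1 H2 d.
have d0 : d != 0 by rewrite /d subr_eq0 gt_eqF.
have G1 : dag b * b = dag a * a + (- gamma)%:A by rewrite H1 scaleNr addrK.
have G2 : b * dag b = a * dag a + (- delta)%:A by rewrite H2 scaleNr addrK.
have E1 := L1 Hd H1 H2.
have E2 := L1' Hd H1 H2.
have E3 := L2 Hd H1 H2.
have E4 := L2' Hd H1 H2.
have E5 := L1' Hd G1 G2.
have E6 := L1 Hd G1 G2.
have E7 := L2' Hd G1 G2.
have E8 := L2 Hd G1 G2.
have S1 := L3 Hd H1 H2.
have S2 := L3 Hd H2 H1.
have ee : - delta - - gamma = - d by rewrite /d opprB opprK addrC.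
rewrite ee in E5 E6 E7 E8; rewrite opprK in E5 E7.
split; first by do !split.
split.
- apply: (su11_gen Hd d0) => //.
- apply: (su11_gen Hd d0) => //.
  by rewrite commN S2 -scaleNr opprK /d opprB.
Qed.
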